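(* Let $D\in\mathbb{N}_1$ and let $\pi^+_D:=\sum_{n\in\mathcal{N}^g,\ \ell(n)\le D}\pi(n)$. Then the expected number of node expansions of $\mathrm{multiTS}(\infty,D)$ before (and including) reaching a node of $\mathcal{N}^g$ satisfies $$\mathbb{E}\bigl[N(\mathrm{multiTS}(\infty,D),\mathcal{N}^g)\bigr]\le \frac{D}{\pi^+_D}.$$
   Context: Setting: a finite action set $\mathcal{A}$, a set of states $\mathcal{S}$ with initial state $s_0$, a deterministic transition function $T:\mathcal{S}\times\mathcal{A}\to\mathcal{S}$, and a set of goal states $\mathcal{G}\subseteq\mathcal{S}$. Nodes are finite sequences of actions; the root $n_0$ is the empty sequence; $T(n)$ is the state reached from $s_0$ by applying the actions of $n$; for a node of $t$ actions, $\ell(n):=t+1$. A policy is a function $\pi$ from nodes to $[0,1]$ with $\pi(n_0)=1$ and $\pi(n)=\sum_{a\in\mathcal{A}}\pi(na)$, with conditional probabilities $\pi(a\mid n)=\pi(na)/\pi(n)$. The target set $\mathcal{N}^g$ is the set of nodes $n$ with $T(n)\in\mathcal{G}$ such that no proper prefix $m$ of $n$ has $T(m)\in\mathcal{G}$. A trial of depth $D$ samples a path $m_1=n_0, m_2=m_1a_1, \dots, m_D=m_{D-1}a_{D-1}$ with $a_i\sim\pi(\cdot\mid m_i)$ and tests $m_1,m_2,\dots$ in order, each test counting as one node expansion, stopping with success at the first $m_i$ with $T(m_i)\in\mathcal{G}$. $\mathrm{multiTS}(\infty,D)$ repeats independent trials of depth $D$ until a success; $N(\mathrm{multiTS}(\infty,D),\mathcal{N}^g)$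 is the total number of node expansions over all trials until success. (If $\pi^+_D=0$ the bound is $+\infty$.) *)

(* Defs.v *)
From HB Require Import structures.
From mathcomp Require Import all_boot all_order all_algebra.
From mathcomp Require Import mathcomp_extra boolp classical_sets reals ereal
  topology normedtype sequences.
Set Implicit Arguments.
Unset Strict Implicit.
Unset Printing Implicit Defensive.
Import Order.TTheory GRing.Theory Num.Theory.
Local Open Scope ring_scope.

Section TreeSearch.
Variables (R : realType) (A : finType) (S : Type) (s0 : S)
  (T : S -> A -> S) (G : pred S) (pi : seq A -> R).

(* A node is a finite sequence of actions; [rcons n a] is the node "na". *)

Definition stateof (n : seq A) : S := foldl T s0 n.

Definition is_policy : Prop :=
  [/\ pi [::] = 1,
      (forall n, 0 <= pi n <= 1) &
      (forall n, pi n = \sum_(a : A) pi (rcons n a))].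

Definition in_target (n : seq A) : bool :=
  G (stateof n) && [forall i : 'I_(size n), ~~ G (stateof (take i n))].

(* pi^+_D = sum of pi(n) over n in N^g with l(n) = |n|+1 <= D. *)
Definition pi_plus (D : nat) : R :=
  \sum_(t < D) \sum_(n : t.-tuple A | in_target n) pi n.

(* Probability that a trial samples the action sequence p:
   prod_i pi(a_i | m_i), with pi(a | n) = pi(na)/pi(n), m_i = take i p. *)
Definition path_prob (p : seq A) : R :=
  \prod_(i < size p) (pi (take i.+1 p) / pi (take i p)).

(* The nodes tested by a trial along p are m_1 = take 0 p, ..., take (size p) p. *)
Definition trial_success (p : seq A) : bool :=
  has (fun i => G (stateof (take i p))) (iota 0 (size p).+1).

Definition trial_cost (p : seq A) : nat :=
  if trial_success p
  then (find (fun i => G (stateof (take i p))) (iota 0 (size p).+1)).+1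
  else (size p).+1.

(* A history of multiTS(oo,D) stopping at trial k+1: the sampled paths of the
   k+1 trials (each of D-1 actions), the first k failing, the last succeeding. *)
Definition path_type (D : nat) := (D.-1).-tuple A.

Definition hist_ok (D k : nat) (h : {ffun 'I_k.+1 -> path_type D}) : bool :=
  [forall i : 'I_k.+1, ((i < k)%N ==> ~~ trial_success (h i))]
  && trial_success (h ord_max).

Definition hist_prob (D k : nat) (h : {ffun 'I_k.+1 -> path_type D}) : R :=
  \prod_(i < k.+1) path_prob (h i).

Definition hist_cost (D k : nat) (h : {ffun 'I_k.+1 -> path_type D}) : nat :=
  \sum_(i < k.+1) trial_cost (h i).

(* P(multiTS stops exactly at trial k+1) *)
Definition stop_prob (D k : nat) : R :=
  \sum_(h : {ffun 'I_k.+1 -> path_type D} | hist_ok h) hist_prob h.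

(* E[N ; multiTS stops exactly at trial k+1] *)
Definition stop_cost_mass (D k : nat) : R :=
  \sum_(h : {ffun 'I_k.+1 -> path_type D} | hist_ok h)
     hist_prob h * (hist_cost h)%:R.

(* E[N(multiTS(oo,D), N^g)]: N = +oo on the event that no trial ever
   succeeds, so the expectation is +oo unless that event has probability 0. *)
Definition expected_expansions (D : nat) : \bar R :=
  if (\sum_(0 <= k <oo) (stop_prob D k)%:E == 1%E)%E
  then (\sum_(0 <= k <oo) (stop_cost_mass D k)%:E)%E
  else +oo%E.

End TreeSearch.

(* Main.v *)
Require Import Defs.
From HB Require Import structures.
From mathcomp Require Import all_boot all_order all_algebra.
From mathcomp Require Import ring lra.
From mathcomp Require Import mathcomp_extra boolp classical_sets reals ereal
  topology normedtype sequences.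
Import Order.TTheory GRing.Theory Num.Theory.
Import numFieldNormedType.Exports.
Local Open Scope ring_scope.
Section Aux.
Variables (R : realType) (A : finType) (S : Type) (s0 : S)
  (T : S -> A -> S) (G : pred S) (pi : seq A -> R).
Hypothesis Hpol : is_policy pi.

Lemma sum_tuple_cons m (F : seq A -> R) :
  \sum_(p : m.+1.-tuple A) F p = \sum_(a : A) \sum_(t : m.-tuple A) F (a :: t).
Proof.
rewrite pair_bigA /=.
rewrite (reindex (fun u : A * m.-tuple A => [tuple of u.1 :: u.2])) //=.
exists (fun t : m.+1.-tuple A => (thead t, [tuple of behead t])).
  by move=> [a t] _ /=; congr pair; apply: val_inj.
by move=> t _; rewrite [in RHS](tuple_eta t).
Qed.

Lemma pi_ge0 n : 0 <= pi n.
Proof. by case: Hpol => _ H _; case/andP: (H n). Qed.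

Lemma pi_rcons_le n a : pi (rcons n a) <= pi n.
Proof.
case: Hpol => _ _ H; rewrite [in leRHS]H (bigD1 a) //= lerDl.
by apply: sumr_ge0 => b _; apply: pi_ge0.
Qed.

Lemma sum_ext m n : \sum_(p : m.-tuple A) pi (n ++ p) = pi n.
Proof.
elim: m n => [|m IH] n.
  rewrite (big_pred1 [tuple]) /=; first by rewrite cats0.
  by move=> t; apply/esym/eqP; apply: val_inj; case: t => [[]].
rewrite (sum_tuple_cons _ (fun p => pi (n ++ p))).
case: Hpol => _ _ H; rewrite [in RHS]H; apply: eq_bigr => a _.
rewrite -IH; apply: eq_bigr => t _.
by rewrite -cat_rcons.
Qed.

Lemma path_prob_pi p : path_prob pi p = pi p.
Proof.
elim/last_ind: p => [|p a IH].
  by rewrite /path_prob big_ord0; case: Hpol.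
rewrite /path_prob size_rcons big_ord_recr /=.
have E : \prod_(i < size p) (pi (take i.+1 (rcons p a)) / pi (take i (rcons p a)))
    = path_prob pi p.
  apply: eq_bigr => i _.
  by rewrite -!cats1 !takel_cat // ltnW.
rewrite E IH (_ : take (size p).+1 (rcons p a) = rcons p a); last first.
  by rewrite take_oversize // size_rcons.
rewrite -cats1 take_size_cat // cats1.
have [E0|nz] := eqVneq (pi p) 0.
  rewrite E0 mul0r; apply/esym/eqP; rewrite eq_le pi_ge0 andbT.
  by rewrite -E0; apply: pi_rcons_le.
by rewrite mulrC mulfVK.
Qed.

Lemma sum_take_ext (F : pred (seq A)) i : forall m n, (i <= m)%N ->
  \sum_(p : m.-tuple A) (F (n ++ take i p))%:R * pi (n ++ p) =
  \sum_(q : i.-tuple A) (F (n ++ q))%:R * pi (n ++ q).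
Proof.
elim: i => [|i IH] m n lim.
  under eq_bigr do rewrite take0 cats0.
  rewrite -mulr_sumr sum_ext.
  rewrite (big_pred1 [tuple]) /=; first by rewrite cats0.
  by move=> t; apply/esym/eqP; apply: val_inj; case: t => [[]].
case: m lim => [//|m] lim.
rewrite (sum_tuple_cons _ (fun p => (F (n ++ take i.+1 p))%:R * pi (n ++ p))).
rewrite (sum_tuple_cons _ (fun q => (F (n ++ q))%:R * pi (n ++ q))).
apply: eq_bigr => a _ /=.
under eq_bigr do rewrite -!cat_rcons.
under [RHS]eq_bigr do rewrite -!cat_rcons.
exact: IH.
Qed.

Lemma first_hit (f : nat -> bool) N :
  \sum_(i < N) ((f i && all (fun j => ~~ f j) (iota 0 i)))%:R
    = (has f (iota 0 N))%:R :> R.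
Proof.
elim: N => [|N IH]; first by rewrite big_ord0.
rewrite big_ord_recr IH (_ : iota 0 N.+1 = iota 0 N ++ [:: N]); last first.
  by rewrite -addn1 iotaD.
rewrite has_cat /= orbF.
have -> : all (fun j => ~~ f j) (iota 0 N) = ~~ has f (iota 0 N).
  by rewrite -all_predC.
by case: (has f _); case: (f N); rewrite /= ?addr0 ?add0r.
Qed.

Lemma in_targetE n : in_target s0 T G n =
  G (stateof s0 T n) && all (fun j => ~~ G (stateof s0 T (take j n))) (iota 0 (size n)).
Proof.
rewrite /in_target; congr andb.
apply/forallP/allP => [H j|H j].
  rewrite mem_iota add0n => /andP [_ lt]; exact: (H (Ordinal lt)).
by apply: H; rewrite mem_iota add0n /=.
Qed.

Lemma succ_sum m : \sum_(p : m.-tuple A | trial_success s0 T G p) pi p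
  = pi_plus s0 T G pi m.+1.
Proof.
rewrite big_mkcond /=.
have E : forall p : m.-tuple A, (if trial_success s0 T G p then pi p else 0)
   = \sum_(i < m.+1) (in_target s0 T G (take i p))%:R * pi p.
  move=> p; rewrite -mulr_suml.
  have -> : \sum_(i < m.+1) ((in_target s0 T G (take i p))%:R : R)
     = \sum_(i < m.+1) ((G (stateof s0 T (take i p)) &&
          all (fun j => ~~ G (stateof s0 T (take j p))) (iota 0 i)))%:R.
    apply: eq_bigr => i _; rewrite in_targetE size_takel; last first.
      by rewrite size_tuple -ltnS.
    congr ((G _ && _)%:R).
    apply: eq_in_all => j; rewrite mem_iota add0n /= => lt.
    by rewrite take_takel // ltnW.
  rewrite first_hit /trial_success size_tuple.
  by case: (has _ _); rewrite ?mul1r ?mul0r.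
rewrite (eq_bigr _ (fun p _ => E p)) exchange_big /=.
rewrite /pi_plus; apply: eq_bigr => i _.
have := sum_take_ext (in_target s0 T G) i m [::] (ltn_ord i).
rewrite /= => ->; rewrite [RHS]big_mkcond /=; apply: eq_bigr => q _.
by case: (in_target s0 T G q); rewrite ?mul1r ?mul0r.
Qed.


Lemma pp_ge0 p : 0 <= path_prob pi p.
Proof. by rewrite path_prob_pi pi_ge0. Qed.

Lemma sum_pp_all m : \sum_(p : m.-tuple A) path_prob pi p = 1.
Proof.
under eq_bigr do rewrite path_prob_pi.
by have := sum_ext m [::]; rewrite /= => ->; case: Hpol.
Qed.

Lemma sum_pp_succ m :
  \sum_(p : m.-tuple A | trial_success s0 T G p) path_prob pi p
  = pi_plus s0 T G pi m.+1.
Proof. by under eq_bigr do rewrite path_prob_pi; rewrite succ_sum. Qed.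

Lemma sum_pp_fail m :
  \sum_(p : m.-tuple A | ~~ trial_success s0 T G p) path_prob pi p
  = 1 - pi_plus s0 T G pi m.+1.
Proof.
have := sum_pp_all m.
rewrite (bigID (fun p : m.-tuple A => trial_success s0 T G p)) /= sum_pp_succ => <-.
by rewrite addrC addrK.
Qed.

Lemma stop_probE D k : (1 <= D)%N ->
  stop_prob s0 T G pi D k = (1 - pi_plus s0 T G pi D) ^+ k * pi_plus s0 T G pi D.
Proof.
move=> D1.
pose P (i : 'I_k.+1) (j : path_type A D) :=
  if (i < k)%N then ~~ trial_success s0 T G j else trial_success s0 T G j.
have H1 : forall h : {ffun 'I_k.+1 -> path_type A D},
    hist_ok s0 T G h = [forall i, P i (h i)].
  move=> h; rewrite /hist_ok /P; apply/andP/forallP.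
    move=> [/forallP H Hm] i; case: ifP => lt.
      by have := H i; rewrite lt.
    have -> : i = ord_max; last by [].
    by apply: val_inj => /=; apply/eqP; rewrite eqn_leq -ltnS ltn_ord leqNgt lt.
  move=> H; split; last by have := H ord_max; rewrite /= ltnn.
  by apply/forallP => i; apply/implyP => lt; have := H i; rewrite lt.
have H2 : \prod_(i < k.+1) \sum_(j : path_type A D) (P i j)%:R * path_prob pi j
    = stop_prob s0 T G pi D k.
  rewrite bigA_distr_bigA /= /stop_prob [RHS]big_mkcond /=.
  apply: eq_bigr => h _; rewrite H1 big_split /=.
  case: forallP => [H|/existsNP [i Hi]].
    by rewrite big1 ?mul1r // => i _; rewrite H.
  by rewrite (bigD1 i) //= (negbTE (introN idP Hi)) mul0r mul0r.
rewrite -H2 big_ord_recr /= /P ltnn.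
have Ep : forall (b : bool) (F : path_type A D -> bool),
   \sum_(j : path_type A D) (F j)%:R * path_prob pi j =
   \sum_(j : path_type A D | F j) path_prob pi j.
  move=> _ F; rewrite [RHS]big_mkcond; apply: eq_bigr => j _.
  by case: (F j); rewrite ?mul1r ?mul0r.
have Hs : \sum_(j : path_type A D | trial_success s0 T G j) path_prob pi j
    = pi_plus s0 T G pi D.
  by have := sum_pp_succ D.-1; rewrite prednK.
have Hf : \sum_(j : path_type A D | ~~ trial_success s0 T G j) path_prob pi j
    = 1 - pi_plus s0 T G pi D.
  by have := sum_pp_fail D.-1; rewrite prednK.
rewrite (Ep true) Hs; congr (_ * _).
under eq_bigr => i _ do rewrite (ltn_ord i) (Ep true) Hf.
by rewrite prodr_const card_ord.
Qed.

Lemma trial_cost_le D (p : path_type A D) : (1 <= D)%N -> (trial_cost s0 T G p <= D)%N.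
Proof.
move=> D1; rewrite /trial_cost size_tuple prednK //.
case: ifP => // H.
by move: H; rewrite /trial_success has_find size_iota size_tuple prednK.
Qed.

Lemma stop_cost_le D k : (1 <= D)%N ->
  stop_cost_mass s0 T G pi D k <= (k.+1 * D)%:R * stop_prob s0 T G pi D k.
Proof.
move=> D1; rewrite /stop_cost_mass /stop_prob mulr_sumr.
apply: ler_sum => h _; rewrite mulrC; apply: ler_wpM2r.
  by apply: prodr_ge0 => i _; apply: pp_ge0.
rewrite ler_nat /hist_cost -[X in (_ <= X * D)%N](card_ord k.+1) -sum_nat_const.
by apply: leq_sum => i _; apply: trial_cost_le.
Qed.

Lemma stop_cost_ge0 D k : 0 <= stop_cost_mass s0 T G pi D k.
Proof.
apply: sumr_ge0 => h _; apply: mulr_ge0 => //.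
by apply: prodr_ge0 => i _; apply: pp_ge0.
Qed.

Lemma pi_plus_le1 D : (1 <= D)%N -> 0 <= pi_plus s0 T G pi D <= 1.
Proof.
move=> D1; rewrite -(prednK D1) -sum_pp_succ -(sum_pp_all D.-1).
rewrite sumr_ge0 /=; last by move=> p _; apply: pp_ge0.
rewrite [X in _ <= X](bigID (fun p : D.-1.-tuple A => trial_success s0 T G p)) /= lerDl.
by rewrite sumr_ge0 // => p _; apply: pp_ge0.
Qed.

End Aux.

Lemma geom_id (R : realType) (x : R) n :
  (1 - x) * \sum_(k < n) x ^+ k = 1 - x ^+ n.
Proof.
elim: n => [|n IH]; first by rewrite big_ord0 mulr0 expr0 subrr.
by rewrite big_ord_recr /= mulrDr IH exprS; ring.
Qed.

Lemma geom2_id (R : realType) (x : R) n :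
  (1 - x) * \sum_(k < n) (k.+1)%:R * x ^+ k = \sum_(k < n) x ^+ k - n%:R * x ^+ n.
Proof.
elim: n => [|n IH]; first by rewrite !big_ord0 mulr0 mul0r subrr.
rewrite !big_ord_recr /= mulrDr IH exprS -natr1 /=.
ring.
Qed.

Lemma geom2_le (R : realType) (q : R) n : 0 < q -> q <= 1 ->
  \sum_(k < n) (k.+1)%:R * (1 - q) ^+ k * q <= q^-1.
Proof.
move=> q0 q1.
have x0 : 0 <= 1 - q by rewrite subr_ge0.
have H := @geom2_id R (1 - q) n; rewrite opprB addrC subrK in H.
have H2 := @geom_id R (1 - q) n; rewrite opprB addrC subrK in H2.
rewrite -mulr_suml.
have S0 : 0 <= \sum_(k < n) (k.+1)%:R * (1 - q) ^+ k.
  by apply: sumr_ge0 => k _; apply: mulr_ge0 => //; apply: exprn_ge0.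
set Sm := \sum_(k < n) _ in S0 H *.
set Gm := \sum_(k < n) _ in H H2 *.
rewrite -(ler_pM2r q0) mulVf ?gt_eqF // (_ : Sm * q * q = q * (q * Sm)); last by ring.
rewrite H mulrBr H2.
have h1 : 0 <= (1 - q) ^+ n by apply: exprn_ge0.
have h2 : 0 <= q * (n%:R * (1 - q) ^+ n) by apply: mulr_ge0; [exact: ltW | apply: mulr_ge0].
lra.
Qed.

Theorem theorem4 (R : realType) (A : finType) (S : Type) (s0 : S)
    (T : S -> A -> S) (G : pred S) (pi : seq A -> R) (D : nat) :
  (1 <= D)%N ->
  is_policy pi ->
  (expected_expansions s0 T G pi D <=
     (if (0 < pi_plus s0 T G pi D)%R
      then (D%:R / pi_plus s0 T G pi D)%:E
      else +oo))%E.
Proof.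
move=> D1 Hp.
case: ifP => qpos; last by rewrite leey.
have /andP [q0 q1] := pi_plus_le1 _ _ _ s0 T G _ Hp _ D1.
set q := pi_plus s0 T G pi D in qpos q0 q1 *.
have Esp : forall k, stop_prob s0 T G pi D k = q * (1 - q) ^+ k.
  by move=> k; rewrite (stop_probE _ _ _ s0 T G _ Hp) // mulrC.
rewrite /expected_expansions.
have -> : (\sum_(0 <= k <oo) (stop_prob s0 T G pi D k)%:E = 1)%E.
  under eq_fun do rewrite sumEFin.
  have -> : (fun x : nat => (\sum_(0 <= i < x) stop_prob s0 T G pi D i)%:E)
     = EFin \o series (geometric q (1 - q)).
    apply: funext => n /=; rewrite /series /=; congr EFin.
    by apply: eq_bigr => i _; rewrite Esp.
  have nx : `|1 - q| < 1.
    rewrite ger0_norm ?subr_ge0 //; lra.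
  rewrite EFin_lim; last exact: is_cvg_geometric_series.
  have L : limn (series (geometric q (1 - q))) = q / (1 - (1 - q)).
    by apply/cvg_lim => //; exact: cvg_geometric_series.
  rewrite L.
  by rewrite opprB addrC subrK mulfV ?gt_eqF.
rewrite eqxx.
apply: lime_le.
  apply: ereal_nondecreasing_is_cvgn; apply: ereal_nondecreasing_series => n _ _.
  by rewrite lee_fin (stop_cost_ge0 _ _ _ s0 T G _ Hp).
apply: nearW => n /=.
rewrite sumEFin lee_fin big_mkord.
apply: (@le_trans _ _ (\sum_(k < n) (k.+1 * D)%:R * stop_prob s0 T G pi D k)).
  by apply: ler_sum => k _; apply: (stop_cost_le _ _ _ s0 T G _ Hp).
have -> : \sum_(k < n) (k.+1 * D)%:R * stop_prob s0 T G pi D k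
    = D%:R * \sum_(k < n) (k.+1)%:R * (1 - q) ^+ k * q.
  rewrite mulr_sumr; apply: eq_bigr => k _; rewrite Esp natrM; ring.
by rewrite ler_wpM2l // geom2_le.
Qed.
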